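(* Let $\mathcal M=(G,In,Out,Leak)$ be a linear compartmental model with compartmental matrix $A$, and let $i,j$ be distinct compartments with $i\ne1$ and $j\ne1$. Then $$\det\big((\lambda I-A)^{\{1,i\},\{1,j\}}\big)=\lambda^{-1}\det\big((\lambda I-A^*_1)^{i,j}\big).$$
   Context: A linear compartmental model $\mathcal M=(G,In,Out,Leak)$ consists of a finite directed graph $G=(V_G,E_G)$ without multi-edges, compartments $V_G=\{1,\dots,n\}$, and subsets $In,Out,Leak\subseteq V_G$; edge $q\to p$ carries parameter $a_{pq}$ and each $p\in Leak$ carries $a_{0p}$. The compartmental matrix $A$ has $A_{pp}=-\sum_{k:\,p\to k\in E_G}a_{kp}$ (minus $a_{0p}$ if $p\in Leak$), $A_{pq}=a_{pq}$ if $q\to p\in E_G$, $0$ otherwise. $A^*_1$ is the matrix obtained from $A$ by replacing its first column by zeros. For a matrix $B$, $B^{i,j}$ removes row $i$ and column $j$, and $B^{\{1,i\},\{1,j\}}$ removes rows $1,i$ and columns $1,j$. $\lambda$ is an indeterminate. *)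

(* Defs.v *)
From HB Require Import structures.
From mathcomp Require Import all_boot all_order all_algebra fraction.
Set Implicit Arguments. Unset Strict Implicit. Unset Printing Implicit Defensive.
Import Order.TTheory GRing.Theory Num.Theory FracField.
Local Open Scope ring_scope.

(* Compartments {1,...,m} are represented by 'I_m, compartment k being the
   ordinal k-1; in particular compartment 1 is ord0.
   The graph G is a relation E : rel 'I_m, with E q p meaning the edge q -> p. *)

Definition compartmental_matrix (R : pzRingType) (m : nat) (E : rel 'I_m)
    (Leak : {set 'I_m}) (a : 'I_m -> 'I_m -> R) (a0 : 'I_m -> R) : 'M[R]_m :=
  \matrix_(p, q)
    if p == q then
      - (\sum_(k | E p k) a k p) - (if p \in Leak then a0 p else 0)
    else if E q p then a p q else 0.

Definition Astar1 (R : pzRingType) (m : nat) (A : 'M[R]_m.+1) : 'M[R]_m.+1 :=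
  \matrix_(p, q) if q == ord0 then 0 else A p q.

(* The submatrix of M obtained by deleting the rows in S and the columns in T,
   remaining rows/columns kept in increasing order; p is the size of the result
   (which must equal m - #|S| = m - #|T| for this to be meaningful). *)
Definition del_submx (R : Type) (m p : nat) (M : 'M[R]_m.+1)
    (S T : {set 'I_m.+1}) : 'M[R]_p :=
  \matrix_(k < p, l < p)
    M (nth ord0 (enum (~: S)) k) (nth ord0 (enum (~: T)) l).

Definition lam (R : idomainType) : {fraction {poly R}} := FracField.tofrac (R := {poly R}) 'X.

Definition embF (R : idomainType) (x : R) : {fraction {poly R}} := FracField.tofrac (x%:P).

Definition lamI_minus (R : idomainType) (m : nat) (B : 'M[R]_m)
  : 'M[{fraction {poly R}}]_m := (lam R)%:M - map_mx (@embF R) B.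

(* Main.v *)
Require Import Defs.
From HB Require Import structures.
From mathcomp Require Import all_boot all_order all_algebra fraction.
Import GRing.Theory FracField.
Local Open Scope ring_scope.

Lemma enum_split {m} {i : 'I_m.+1} : i != ord0 ->
  enum (~: [set i]) = ord0 :: enum (~: [set ord0; i]).
Proof.
move=> i0.
rewrite /enum_mem -!enumT enum_ordSl /=.
rewrite !inE eq_sym (negPf i0) /=.
congr (_ :: _); apply: eq_in_filter => x /mapP [y _ ->].
by rewrite !inE.
Qed.
Theorem lemma3p10 (R : idomainType) (n : nat) (E : rel 'I_n.+1)
    (In Out Leak : {set 'I_n.+1})
    (a : 'I_n.+1 -> 'I_n.+1 -> R) (a0 : 'I_n.+1 -> R)
    (i j : 'I_n.+1) :
  i != j -> i != ord0 -> j != ord0 ->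
  let A := compartmental_matrix E Leak a a0 in
  \det (del_submx n.-1 (lamI_minus A) [set ord0; i] [set ord0; j])
  = (lam R)^-1 * \det (del_submx n (lamI_minus (Astar1 A)) [set i] [set j]).
Proof.
move=> ij i0 j0 A.
case: n => [|n] in E In Out Leak a a0 i j ij i0 j0 A *.
  by move: i0; rewrite (ord1 i).
rewrite /=.
have sz (x : 'I_n.+2) : x != ord0 -> size (enum (~: [set ord0; x])) = n.
  move=> x0; have := cardsC [set x]; rewrite cards1 card_ord cardE enum_split //=.
  by move=> /eqP; rewrite add1n !eqSS => /eqP.
have nz (x : 'I_n.+2) (k : nat) : x != ord0 -> (k < n)%N -> nth ord0 (enum (~: [set ord0; x])) k != ord0.
  move=> x0 kn; have : nth ord0 (enum (~: [set ord0; x])) k \in enum (~: [set ord0; x]).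
    by apply: mem_nth; rewrite sz.
  by rewrite mem_enum !inE negb_or => /andP[].
set N := del_submx n.+1 _ _ _.
have lam0 : lam R != 0 by rewrite /lam tofrac_eq0 polyX_eq0.
rewrite (expand_det_col N ord0) big_ord_recl big1; last first.
  move=> k _; rewrite /N /del_submx !mxE /= !(enum_split i0) !(enum_split j0) /=.
  by rewrite add0n (negPf (nz _ _ i0 (ltn_ord k))) mulr0n /embF polyC0 tofrac0 subr0 mul0r.
rewrite addr0 /N /del_submx !mxE /= !(enum_split i0) !(enum_split j0) /=.
rewrite /embF polyC0 tofrac0 subr0 mulr1n mulKf // /cofactor /= expr0 mul1r.

congr (\det _); apply/matrixP => k l; rewrite !mxE /= !add0n.
by rewrite (negPf (nz _ _ j0 (ltn_ord l))).
Qed.
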